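(* Let $\mathfrak{C}=(U,M,I,N,J)$ be a formal decision context, let $\mathfrak{R}_{I}(\mathfrak{C})$ be its set of I-decision rules, ordered by the rule implication relation $\Rightarrow$, and let $\overline{\mathfrak{R}}_{I}(\mathfrak{C})$ be its set of necessary I-decision rules. Then: (1) $(\mathfrak{R}_{I}(\mathfrak{C}),\Rightarrow)$ is a partially ordered set. That is: $r\Rightarrow r$ for every $r\in\mathfrak{R}_{I}(\mathfrak{C})$; $r_1\Rightarrow r_2$ and $r_2\Rightarrow r_1$ imply $r_1=r_2$; and $r_1\Rightarrow r_2$ and $r_2\Rightarrow r_3$ imply $r_1\Rightarrow r_3$. (2) $r\in\overline{\mathfrak{R}}_{I}(\mathfrak{C})$ if and only if, for every $r'\in\mathfrak{R}_{I}(\mathfrak{C})$, $r'\Rightarrow r$ implies $r'=r$. In other words, $r$ is a minimal element of $(\mathfrak{R}_{I}(\mathfrak{C}),\Rightarrow)$. (3) Suppose $O\in \mathrm{Ext}L_{O}(\mathfrak{C}_M)\cap \mathrm{Ext}L(\mathfrak{C}_N)$, $O\neq\emptyset$ and $O\neq U$. Then $(O,O^{\square_M})\in L_O(\mathfrak{C}_M)$, $(O,O^{\uparrow_N})\in L(\mathfrak{C}_N)$, and $(O,O^{\square_M})\rightarrow(O,O^{\uparrow_N})$ is a necessary I-decision rule.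
   Context: Formal context $(U,M,I)$: $U$ and $M$ are finite nonempty sets and $I\subseteq U\times M$. For $O\subseteq U$ and $C\subseteq M$ define: - $O^{\uparrow}=\{a\in M\mid \forall x\in O\,((x,a)\in I)\}$ and $C^{\downarrow}=\{x\in U\mid \forall a\in C\,((x,a)\in I)\}$; - $O^{\square}=\{a\in M\mid \forall x\in U\,((x,a)\in I\Rightarrow x\in O)\}$ and $C^{\lozenge}=\{x\in U\mid \exists a\in C\,((x,a)\in I)\}$. A formal concept is a pair $(O,C)$ with $O^\uparrow=C$ and $C^\downarrow=O$; the set of formal concepts is $L$. An object-oriented concept is a pair $(O,C)$ with $O^\square=C$ and $C^\lozenge=O$; the set of these is $L_O$. $\mathrm{Ext}$ denotes the set of first components (extents). Standing assumption: every formal context is canonical, i.e. for all $x\in U$ and $a\in M$ we have $\{x\}^\uparrow\ne\emptyset$, $\{x\}^\uparrow\ne M$, $\{a\}^\downarrow\ne\emptyset$ and $\{a\}^\downarrow\ne U$. A formal decision context $\mathfrak{C}=(U,M,I,N,J)$ consists of formal contexts $\mathfrak{C}_M=(U,M,I)$ (conditional) and $\mathfrak{C}_N=(U,N,J)$ (decision) with $M\cap N=\emptyset$. Operators computed in $\mathfrak{C}_M$ carry subscript $M$, and those computed in $\mathfrak{C}_N$ carry subscript $N$. An I-decision rule is $(O,C)\rightarrow(Y,D)$ with $(O,C)\in L_O(\mathfrak{C}_M)$, $(Y,D)\in L(\mathfrak{C}_N)$, $O\subseteq Y$, $O\ne\emptyset$ and $Y\ne U$. Implication between rules: $(O_1,C_1)\rightarrow(Y_1,D_1)\Rightarrow(O_2,C_2)\rightarrow(Y_2,D_2)$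 iff $O_2\subseteq O_1\subseteq Y_1\subseteq Y_2$. A rule $r$ is redundant if some rule $r_1\ne r$ in $\mathfrak{R}_I(\mathfrak{C})$ satisfies $r_1\Rightarrow r$; otherwise $r$ is necessary. *)

(* Defs.v *)
From mathcomp Require Import all_boot.
Set Implicit Arguments. Unset Strict Implicit. Unset Printing Implicit Defensive.

Section FCA.
Variables (U M : finType) (I : U -> M -> bool).

Definition up (X : {set U}) : {set M} := [set a | [forall x in X, I x a]].
Definition down (C : {set M}) : {set U} := [set x | [forall a in C, I x a]].
Definition box (X : {set U}) : {set M} := [set a | [forall x, I x a ==> (x \in X)]].
Definition dia (C : {set M}) : {set U} := [set x | [exists a in C, I x a]].

Definition is_concept (X : {set U}) (C : {set M}) : Prop := up X = C /\ down C = X.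
Definition is_oconcept (X : {set U}) (C : {set M}) : Prop := box X = C /\ dia C = X.

Definition in_ExtL (X : {set U}) : Prop := exists C, is_concept X C.
Definition in_ExtLO (X : {set U}) : Prop := exists C, is_oconcept X C.

Definition canonical_context : Prop :=
  (exists x : U, True) /\ (exists a : M, True) /\
  (forall x : U, up [set x] != set0 /\ up [set x] != setT) /\
  (forall a : M, down [set a] != set0 /\ down [set a] != setT).
End FCA.

(* A rule (X,C) -> (Y,D) is encoded as ((X,C),(Y,D)). *)
Definition rule (U M N : finType) : Type :=
  prod (prod {set U} {set M}) (prod {set U} {set N}).

Section Rules.
Variables (U M N : finType) (I : U -> M -> bool) (J : U -> N -> bool).

Definition is_Irule (r : rule U M N) : Prop :=
  let: ((X, C), (Y, D)) := r in
  is_oconcept I X C /\ is_concept J Y D /\ X \subset Y /\ X != set0 /\ Y != setT.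

Definition rule_imp (r1 r2 : rule U M N) : Prop :=
  let: ((X1, _), (Y1, _)) := r1 in
  let: ((X2, _), (Y2, _)) := r2 in
  X2 \subset X1 /\ X1 \subset Y1 /\ Y1 \subset Y2.

Definition redundant (r : rule U M N) : Prop :=
  exists r1, is_Irule r1 /\ r1 <> r /\ rule_imp r1 r.

Definition necessary (r : rule U M N) : Prop := is_Irule r /\ ~ redundant r.
End Rules.

(* Main.v *)
Require Import Defs.
From mathcomp Require Import all_boot.

Lemma rule_eq (U M N : finType) (I : U -> M -> bool) (J : U -> N -> bool)
  (r1 r2 : rule U M N) : is_Irule I J r1 -> is_Irule I J r2 ->
  r1.1.1 = r2.1.1 -> r1.2.1 = r2.2.1 -> r1 = r2.
Proof.
case: r1 => [[X1 C1] [Y1 D1]]; case: r2 => [[X2 C2] [Y2 D2]] /=.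
move=> [[<- _] [[<- _] _]] [[<- _] [[<- _] _]] -> -> //.
Qed.

Theorem theorem3p4 (U M N : finType) (I : U -> M -> bool) (J : U -> N -> bool)
  (canM : canonical_context I) (canN : canonical_context J) :
  (* (1) partial order on R_I(C) *)
  ((forall r, is_Irule I J r -> rule_imp r r) /\
   (forall r1 r2, is_Irule I J r1 -> is_Irule I J r2 ->
      rule_imp r1 r2 -> rule_imp r2 r1 -> r1 = r2) /\
   (forall r1 r2 r3, is_Irule I J r1 -> is_Irule I J r2 -> is_Irule I J r3 ->
      rule_imp r1 r2 -> rule_imp r2 r3 -> rule_imp r1 r3)) /\
  (* (2) necessary = minimal *)
  (forall r, is_Irule I J r ->
     (necessary I J r <->
      (forall r', is_Irule I J r' -> rule_imp r' r -> r' = r))) /\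
  (* (3) *)
  (forall X : {set U}, in_ExtLO I X -> in_ExtL J X -> X != set0 -> X != setT ->
     is_oconcept I X (box I X) /\ is_concept J X (up J X) /\
     necessary I J ((X, box I X), (X, up J X))).
Proof.
split; [split; [|split]|split].
- case=> [[X C] [Y D]] [_ [_ [H _]]] /=; by rewrite !subxx H.
- move=> r1 r2 H1 H2; move: (@rule_eq _ _ _ I J _ _ H1 H2).
  case: r1 H1 => [[X1 C1] [Y1 D1]]; case: r2 H2 => [[X2 C2] [Y2 D2]] /= _ _ E.
  move=> [a [b c]] [d [e f]]; apply: E; apply/eqP; rewrite eqEsubset ?a ?d ?c ?f //.
- case=> [[X1 C1] [Y1 D1]]; case=> [[X2 C2] [Y2 D2]]; case=> [[X3 C3] [Y3 D3]] /= _ _ _.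
  move=> [a [b c]] [d [e f]]; split; first exact: subset_trans d a.
  split=> //; exact: subset_trans c f.
- move=> r Hr; split.
  + move=> [_ Hn] r' Hr' Himp; case: (r' =P r) => // Hne; exfalso; apply: Hn.
    by exists r'.
  + move=> H; split=> //; move=> [r1 [H1 [Hne Himp]]]; by apply: Hne; apply: H.
- move=> X [C [HC1 HC2]] [D [HD1 HD2]] Hn0 HnT.
  have Ho : is_oconcept I X (box I X) by split=> //; rewrite HC1.
  have Hc : is_concept J X (up J X) by split=> //; rewrite HD1.
  have Hr : is_Irule I J ((X, box I X), (X, up J X)) by split=> //; split=> //; rewrite subxx.
  split=> //; split=> //; split=> //.
  move=> [r1 [H1 [Hne Himp]]]; apply: Hne; apply: (@rule_eq _ _ _ I J _ _ H1 Hr).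
  + move: H1 Himp; case: r1 => [[X1 C1] [Y1 D1]] /= _ [a [b c]].
    apply/eqP; rewrite eqEsubset a andbT; exact: subset_trans b c.
  + move: H1 Himp; case: r1 => [[X1 C1] [Y1 D1]] /= _ [a [b c]].
    apply/eqP; rewrite eqEsubset c /=; exact: subset_trans a b.
Qed.
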